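(* Consider $N$ agents whose states stack into $x\in\mathbb{R}^n$, each state coordinate belonging to exactly one agent. Let $A\in\mathbb{R}^{n\times n}$, $W\in\mathbb{R}^{n\times n}$ symmetric positive definite, $C=\mathrm{diag}(C_{11},\dots,C_{nn})$ diagonal positive definite (block-diagonal over agents). For each agent $i$ let $\Delta_{\ell_2}y_i>0$ be the $\ell_2$-sensitivity of its output map, take $\delta_i\in[10^{-5},10^{-1}]$, $\epsilon_i>0$, and set $\sigma_i=\frac{\Delta_{\ell_2}y_i}{2\epsilon_i}\big(K_{\delta_i}+\sqrt{K_{\delta_i}^2+2\epsilon_i}\big)$; let $V$ be the diagonal matrix whose $j$-th diagonal entry is $\sigma_i^2$ for the agent $i$ owning coordinate $j$. Let $\Sigma$ be the unique positive semidefinite solution of $\Sigma=A\Sigma A^T-A\Sigma C^T(C\Sigma C^T+V)^{-1}C\Sigma A^T+W$ and $\overline\Sigma=(C^TV^{-1}C+\Sigma^{-1})^{-1}$ (the MSE matrix of the a posteriori estimates). Let $B_l,B_u$ be real numbers and define, for each $i$, $$\eta_3:=\left(\frac{B_lC_u^2}{(\Delta_{\ell_2}y_i)^2\big(n-B_l\lambda_n^{-1}(W)\big)}\right)^{1/2},\qquad \eta_4:=\left(\frac{B_uC_l^2}{n(\Delta_{\ell_2}y_i)^2}\right)^{1/2},$$ assumed to be positive real numbers. If for all $i$ $$\frac18\left(\frac{1+\sqrt{36\eta_4+1}}{\eta_4}\right)^2\le\epsilon_i\le\frac1{\eta_3},$$ then $B_l\le\mathrm{tr}\,\overline\Sigma\le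 B_u$.
   Context: $\mathcal{Q}(y)=\frac{1}{\sqrt{2\pi}}\int_y^\infty e^{-z^2/2}dz$ and $K_\delta=\mathcal{Q}^{-1}(\delta)$. $\lambda_n(\cdot)$ is the smallest eigenvalue. With $V_{jj}=\sigma_j^2$ the noise variance of coordinate $j$, $l=\arg\min_j C_{jj}^2/\sigma_j^2$, $u=\arg\max_j C_{jj}^2/\sigma_j^2$, $C_l=C_{ll}$, $C_u=C_{uu}$. The $\ell_2$-sensitivity of agent $i$'s output $y_i(k)=C_ix_i(k)$ is $\sup\|C_ix_i-C_ix_i'\|_{\ell_2}$ over state trajectories with $\|x_i-x_i'\|_{\ell_2}\le b_i$ for a given adjacency parameter $b_i>0$. *)

(* Defs.v *)
From HB Require Import structures.
From mathcomp Require Import all_boot all_order all_algebra.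
From mathcomp Require Import all_classical all_reals all_analysis.
Set Implicit Arguments. Unset Strict Implicit. Unset Printing Implicit Defensive.
Import Order.TTheory GRing.Theory Num.Theory.
Import numFieldNormedType.Exports.
Local Open Scope classical_set_scope.
Local Open Scope ring_scope.

Definition Qfun (R : realType) (y : R) : R :=
  (Num.sqrt (2 * pi))^-1 *
  fine (\int[@lebesgue_measure R]_(z in `[y, +oo[%classic) (expR (- (z ^+ 2) / 2))%:E).

Definition psd (R : realType) n (M : 'M[R]_n) : Prop :=
  M^T = M /\ forall v : 'cV[R]_n, 0 <= (v^T *m M *m v) 0 0.
Definition pd (R : realType) n (M : 'M[R]_n) : Prop :=
  M^T = M /\ forall v : 'cV[R]_n, v != 0 -> 0 < (v^T *m M *m v) 0 0.

Definition is_min_eigenvalue (R : realType) n (M : 'M[R]_n) (lam : R) : Prop :=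
  eigenvalue M lam /\ forall a : R, eigenvalue M a -> lam <= a.

Definition l2sq_agent (R : realType) n N (owner : 'I_n -> 'I_N) (i : 'I_N)
  (d : nat -> 'I_n -> R) : \bar R :=
  (\sum_(0 <= k <oo) (\sum_(j | owner j == i) (d k j) ^+ 2)%:E)%E.

(* l2-sensitivity of y_i(k) = C_i x_i(k) with C = diag(c), adjacency b:
   sup ||C_i x_i - C_i x_i'||_{l2}  over  ||x_i - x_i'||_{l2} <= b *)
Definition sensitivity (R : realType) n N (owner : 'I_n -> 'I_N) (c : 'I_n -> R)
  (b : R) (i : 'I_N) : R :=
  Num.sqrt (fine (ereal_sup
    [set r : \bar R | exists (x x' : nat -> 'I_n -> R),
       (l2sq_agent owner i (fun k j => (x k j - x' k j)%R) <= ((b ^+ 2)%R)%:E)%E /\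
       r = l2sq_agent owner i (fun k j => c j * x k j - c j * x' k j)])).

(* Main.v *)
Require Import Defs.
From HB Require Import structures.
From mathcomp Require Import all_boot all_order all_algebra.
From mathcomp Require Import all_classical all_reals all_analysis.
From mathcomp Require Import measurable_realfun.
From mathcomp Require Import ring lra.
Import Order.TTheory GRing.Theory Num.Theory.

Module Helpers.
Set Implicit Arguments. Unset Strict Implicit. Unset Printing Implicit Defensive.
Import numFieldNormedType.Exports.
Local Open Scope classical_set_scope.
Local Open Scope ring_scope.

Definition qf {R : realFieldType} {n} (M : 'M[R]_n) (x y : 'cV[R]_n) : R := (x^T *m M *m y) 0 0.

Lemma qfE {R : realFieldType} n (M : 'M[R]_n) x y :
  qf M x y = \sum_i \sum_j x i 0 * M i j * y j 0.
Proof.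
rewrite /qf mxE exchange_big /=; apply: eq_bigr => j _.
rewrite mxE big_distrl /=; apply: eq_bigr => i _; by rewrite mxE.
Qed.

Lemma qfDl {R : realFieldType} n (M : 'M[R]_n) x1 x2 y :
  qf M (x1 + x2) y = qf M x1 y + qf M x2 y.
Proof. by rewrite /qf linearD /= !mulmxDl mxE. Qed.
Lemma qfDr {R : realFieldType} n (M : 'M[R]_n) x y1 y2 :
  qf M x (y1 + y2) = qf M x y1 + qf M x y2.
Proof. by rewrite /qf !mulmxDr mxE. Qed.
Lemma qfZl {R : realFieldType} n (M : 'M[R]_n) a x y :
  qf M (a *: x) y = a * qf M x y.
Proof. by rewrite /qf linearZ /= -!scalemxAl mxE. Qed.
Lemma qfZr {R : realFieldType} n (M : 'M[R]_n) a x y :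
  qf M x (a *: y) = a * qf M x y.
Proof. by rewrite /qf -!scalemxAr mxE. Qed.
Lemma qfT {R : realFieldType} n (M : 'M[R]_n) x y :
  qf M x y = qf M^T y x.
Proof.
rewrite /qf; transitivity (((x^T *m M *m y)^T) 0 0); first by rewrite [RHS]mxE.
by rewrite !trmx_mul trmxK mulmxA.
Qed.
Lemma qfMD {R : realFieldType} n (M N : 'M[R]_n) x y :
  qf (M + N) x y = qf M x y + qf N x y.
Proof. by rewrite /qf mulmxDr mulmxDl mxE. Qed.


Lemma qf_expand {R : realFieldType} n (M : 'M[R]_n) x y t :
  qf M (x + t *: y) (x + t *: y) =
  qf M x x + t * qf M x y + t * qf M y x + t ^+ 2 * qf M y y.
Proof. rewrite qfDl !qfDr !qfZl !qfZr; ring. Qed.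

Lemma qf_sym {R : realFieldType} n (M : 'M[R]_n) x y :
  M^T = M -> qf M y x = qf M x y.
Proof. by move=> MT; rewrite qfT MT. Qed.

Lemma qf_CS {R : realFieldType} n (M : 'M[R]_n) :
  M^T = M -> (forall v, 0 <= qf M v v) ->
  forall x y, qf M x y ^+ 2 <= qf M x x * qf M y y.
Proof.
move=> MT psdM x y.
have key t : 0 <= qf M x x + 2 * t * qf M x y + t ^+ 2 * qf M y y.
  have := psdM (x + t *: y); rewrite qf_expand (qf_sym _ _ MT).
  by move=> h; apply: le_trans h _; rewrite le_eqVlt; apply/orP; left; apply/eqP; ring.
set a := qf M x x in key *; set b := qf M x y in key *; set c := qf M y y in key *.
have a0 : 0 <= a by apply: psdM.
have c0 : 0 <= c by apply: psdM.
have [c_eq0|c_gt0] := eqVneq c 0.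
  have [b_eq0|b_neq0] := eqVneq b 0.
    by rewrite b_eq0 c_eq0 expr0n /= mulr0.
  have := key (- (a + 1) / (2 * b)); rewrite c_eq0 mulr0 addr0.
  have -> : 2 * (- (a + 1) / (2 * b)) * b = - (a + 1).
    by field.
  lra.
have cp : 0 < c by rewrite lt_def c_gt0 c0.
have := key (- b / c).
have -> : a + 2 * (- b / c) * b + (- b / c) ^+ 2 * c = a - b ^+ 2 / c by field.
rewrite subr_ge0 ler_pdivrMr //; lra.
Qed.


Definition nrm2 {R : realFieldType} {n} (x : 'cV[R]_n) : R := \sum_i x i 0 ^+ 2.

Lemma nrm2_ge0 {R : realFieldType} n (x : 'cV[R]_n) : 0 <= nrm2 x.
Proof. by apply: sumr_ge0 => i _; apply: sqr_ge0. Qed.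

Lemma nrm2_ge_coord {R : realFieldType} n (x : 'cV[R]_n) i : x i 0 ^+ 2 <= nrm2 x.
Proof. by rewrite /nrm2 (bigD1 i) //= lerDl sumr_ge0 // => j _; apply: sqr_ge0. Qed.

Lemma nrm2_eq0 {R : realFieldType} n (x : 'cV[R]_n) : nrm2 x = 0 -> x = 0.
Proof.
move=> h; apply/matrixP => i j; rewrite (ord1 j) mxE.
have := nrm2_ge_coord x i; rewrite h => h2.
by apply/eqP; rewrite -sqrf_eq0 eq_le h2 sqr_ge0.
Qed.

Lemma qf1 {R : realFieldType} n (x y : 'cV[R]_n) : qf 1%:M x y = \sum_i x i 0 * y i 0.
Proof. by rewrite /qf mulmx1 mxE; apply: eq_bigr => i _; rewrite mxE. Qed.

Lemma qf1n {R : realFieldType} n (x : 'cV[R]_n) : qf 1%:M x x = nrm2 x.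
Proof. by rewrite qf1; apply: eq_bigr => i _; rewrite expr2. Qed.

Lemma qfZM {R : realFieldType} n (M : 'M[R]_n) a x y : qf (a *: M) x y = a * qf M x y.
Proof. by rewrite /qf -scalemxAr -scalemxAl mxE. Qed.

Lemma qfscal {R : realFieldType} n a (x : 'cV[R]_n) : qf a%:M x x = a * nrm2 x.
Proof. by rewrite -scalemx1 qfZM qf1n. Qed.

Lemma qfBM {R : realFieldType} n (M N : 'M[R]_n) x y :
  qf (M - N) x y = qf M x y - qf N x y.
Proof. by rewrite qfMD -scaleN1r qfZM; ring. Qed.

Lemma qf_mul {R : realFieldType} n (X B D : 'M[R]_n) x y :
  qf X (B *m x) (D *m y) = qf (B^T *m X *m D) x y.
Proof. by rewrite /qf trmx_mul !mulmxA. Qed.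

Lemma qf_entry_bound {R : realFieldType} n (P : 'M[R]_n) w :
  qf P w w <= (\sum_i \sum_j `|P i j|) * nrm2 w.
Proof.
rewrite qfE mulr_suml; apply: ler_sum => i _; rewrite mulr_suml; apply: ler_sum => j _.
have hi := nrm2_ge_coord w i; have hj := nrm2_ge_coord w j.
have h1 : w i 0 * w j 0 <= nrm2 w.
  have : 0 <= (w i 0 - w j 0) ^+ 2 by apply: sqr_ge0.
  nra.
have h2 : - (w i 0 * w j 0) <= nrm2 w.
  have : 0 <= (w i 0 + w j 0) ^+ 2 by apply: sqr_ge0.
  nra.
have hP := ler_norm (P i j); have hP' := ler_normr (P i j) (P i j).
have hn : - P i j <= `|P i j| by rewrite -normrN ler_norm.
have hn0 : 0 <= `|P i j| by [].
have e : w i 0 * P i j * w j 0 = P i j * (w i 0 * w j 0) by ring.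
rewrite e.
have [hs|hs] := lerP 0 (w i 0 * w j 0).
  apply: le_trans (_ : `|P i j| * (w i 0 * w j 0) <= _).
    by apply: ler_wpM2r.
  by apply: ler_wpM2l.
apply: le_trans (_ : `|P i j| * (- (w i 0 * w j 0)) <= _).
  nra.
by apply: ler_wpM2l.
Qed.


Lemma sumabs_ge0 {R : realFieldType} n (P : 'M[R]_n) : 0 <= \sum_i \sum_j `|P i j|.
Proof. by apply: sumr_ge0 => i _; apply: sumr_ge0. Qed.

Lemma unif_pd {R : realFieldType} n (M : 'M[R]_n) :
  M^T = M -> (forall v, 0 <= qf M v v) -> M \in unitmx ->
  exists2 eps, 0 < eps & forall v, eps * nrm2 v <= qf M v v.
Proof.
move=> MT psdM Mu.
set B := invmx M.
set a := \sum_i \sum_j `|M i j|.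
set b := \sum_i \sum_j `|(B^T *m B) i j|.
have a0 : 0 <= a by apply: sumabs_ge0.
have b0 : 0 <= b by apply: sumabs_ge0.
exists (a * b + 1)^-1; first by rewrite invr_gt0; nra.
move=> v; set w := M *m v.
have q0 := psdM v.
have hv : v = B *m w by rewrite /w /B mulKmx.
have h1 : nrm2 v <= b * nrm2 w.
  rewrite -qf1n {1 2}hv qf_mul mulmx1.
  exact: qf_entry_bound.
have h2 : nrm2 w = qf M w v by rewrite -qf1n /qf /w mulmx1 mulmxA.
have cs := qf_CS MT psdM w v.
have h3 : qf M w w <= a * nrm2 w by apply: qf_entry_bound.
have qw0 := psdM w.
have h4 : nrm2 w <= a * qf M v v.
  have [e0|ne0] := eqVneq (nrm2 w) 0; first by rewrite e0; nra.
  have wp : 0 < nrm2 w by rewrite lt_def ne0 nrm2_ge0.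
  rewrite -h2 in cs.
  have : nrm2 w * nrm2 w <= nrm2 w * (a * qf M v v).
    apply: le_trans (_ : qf M w w * qf M v v <= _); first by rewrite -expr2.
    nra.
  by rewrite ler_pM2l.
rewrite ler_pdivrMl; last nra.
have hn := nrm2_ge0 w.
nra.
Qed.

Lemma pd_unit {R : realFieldType} n (M : 'M[R]_n) :
  (forall v, v != 0 -> 0 < qf M v v) -> M \in unitmx.
Proof.
move=> pdM; rewrite -row_free_unit; apply: inj_row_free => v vM.
apply/eqP; apply/negPn/negP => v0.
have : v^T != 0 by rewrite -(inj_eq (@trmx_inj _ _ _)) trmxK linear0.
move/pdM; rewrite /qf trmxK vM mul0mx mxE ltxx //.
Qed.


Lemma qf0l {R : realFieldType} n (M : 'M[R]_n) y : qf M 0 y = 0.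
Proof. by rewrite /qf linear0 !mul0mx mxE. Qed.

Lemma nrm20 {R : realFieldType} n : nrm2 (0 : 'cV[R]_n) = 0.
Proof. by rewrite /nrm2 big1 // => i _; rewrite mxE expr0n. Qed.

Lemma nrm2_gt0 {R : realFieldType} n (v : 'cV[R]_n) : v != 0 -> 0 < nrm2 v.
Proof.
move=> v0; rewrite lt_def nrm2_ge0 andbT; apply/eqP => /nrm2_eq0 h.
by rewrite h eqxx in v0.
Qed.

Lemma mineig {R : realType} n (W : 'M[R]_n) lam (i0 : 'I_n) :
  W^T = W -> (forall v, 0 <= qf W v v) ->
  (forall a, eigenvalue W a -> lam <= a) ->
  forall v, lam * nrm2 v <= qf W v v.
Proof.
move=> WT psdW minl.
pose S := [set r : R | exists2 v : 'cV[R]_n, v != 0 & r = qf W v v / nrm2 v].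
have lb0 : lbound S 0.
  move=> r [v v0 ->]; apply: divr_ge0; [exact: psdW | exact: nrm2_ge0].
have hlb : has_lbound S by exists 0.
set mu := inf S.
have v1 : (const_mx 1 : 'cV[R]_n) != 0.
  apply/eqP => /matrixP /(_ i0 0); rewrite !mxE => /eqP; by rewrite oner_eq0.
have neS : S !=set0.
  by exists (qf W (const_mx 1) (const_mx 1) / nrm2 (const_mx 1 : 'cV[R]_n)); exists (const_mx 1).
have hmu : forall v, mu * nrm2 v <= qf W v v.
  move=> v; have [->|v0] := eqVneq v 0; first by rewrite nrm20 qf0l mulr0.
  have := ge_inf hlb (_ : S (qf W v v / nrm2 v)).
  rewrite -/mu => /(_ (ex_intro2 _ _ v v0 erefl)).
  by rewrite ler_pdivlMr ?nrm2_gt0.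
set N := W - mu%:M.
have NT : N^T = N by rewrite /N linearB /= tr_scalar_mx WT.
have psdN : forall v, 0 <= qf N v v.
  by move=> v; rewrite /N qfBM qfscal subr_ge0.
have nN : N \notin unitmx.
  apply/negP => Nu; have [eps eps0 heps] := unif_pd NT psdN Nu.
  have : lbound S (mu + eps).
    move=> r [v v0 ->]; rewrite ler_pdivlMr ?nrm2_gt0 //.
    have := heps v; rewrite /N qfBM qfscal; lra.
  move/(lb_le_inf neS); rewrite -/mu; lra.
have ev : eigenvalue W mu.
  by rewrite /eigenvalue /eigenspace kermx_eq0 row_free_unit.
have lm := minl _ ev.
move=> v; apply: le_trans (hmu v).
by apply: ler_wpM2r; [exact: nrm2_ge0|].
Qed.


Lemma eig_pos {R : realFieldType} n (W : 'M[R]_n) lam :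
  (forall v, v != 0 -> 0 < qf W v v) -> eigenvalue W lam -> 0 < lam.
Proof.
move=> pdW /eigenvalueP [v vW v0].
have x0 : v^T != 0 by rewrite -(inj_eq (@trmx_inj _ _ _)) trmxK linear0.
have := pdW _ x0.
have -> : qf W v^T v^T = lam * nrm2 v^T.
  by rewrite -qf1n /qf trmxK vW mulmx1 -scalemxAl mxE.
have := nrm2_ge0 v^T; have : nrm2 v^T != 0.
  by apply/eqP => /nrm2_eq0 h; rewrite h eqxx in x0.
move=> h1 h2; rewrite pmulr_lgt0 //; by rewrite lt_def h1 h2.
Qed.

Lemma post_psd {R : realFieldType} n (Sg C V : 'M[R]_n) :
  (forall v, 0 <= qf Sg v v) -> (forall v, 0 <= qf V v v) ->
  (C *m Sg *m C^T + V) \in unitmx ->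
  forall w, 0 <= qf (Sg - Sg *m C^T *m invmx (C *m Sg *m C^T + V) *m C *m Sg) w w.
Proof.
move=> psdS psdV Su w.
set S := C *m Sg *m C^T + V.
set z := invmx S *m (C *m Sg *m w).
have h := addr_ge0 (psdS (w + (-1) *: (C^T *m z))) (psdV z).
rewrite qf_expand in h.
have e1 : qf Sg (C^T *m z) (C^T *m z) = qf (C *m Sg *m C^T) z z.
  by rewrite qf_mul trmxK.
have e2 : qf (C *m Sg *m C^T) z z + qf V z z = qf S z z by rewrite qfMD.
have e3 : qf S z z = qf Sg (C^T *m z) w.
  rewrite /qf [in RHS]trmx_mul trmxK -[z^T *m S *m z]mulmxA /z mulKVmx //.
  by rewrite !mulmxA.
have e4 : qf Sg w (C^T *m z) = qf (Sg *m C^T *m invmx S *m C *m Sg) w w.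
  by rewrite /qf /z !mulmxA.
rewrite qfBM -e4.
rewrite e1 in h.
have : qf Sg w w + -1 * qf Sg w (C^T *m z) + -1 * qf Sg (C^T *m z) w +
     (-1) ^+ 2 * qf (C *m Sg *m C^T) z z + qf V z z =
     qf Sg w w - qf Sg w (C^T *m z) + (qf (C *m Sg *m C^T) z z + qf V z z - qf Sg (C^T *m z) w) by ring.
rewrite e2 e3 subrr addr0 => e; rewrite -e; exact: h.
Qed.


Lemma qf_delta {R : realFieldType} n (B : 'M[R]_n) j :
  qf B (delta_mx j 0) (delta_mx j 0) = B j j.
Proof. by rewrite /qf trmx_delta -rowE -colE !mxE. Qed.

Lemma inv_sym {R : realFieldType} n (M : 'M[R]_n) : M^T = M -> (invmx M)^T = invmx M.
Proof. by move=> MT; rewrite trmx_inv MT. Qed.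

Lemma inv_entry_ub {R : realFieldType} n (M : 'M[R]_n) (d : 'I_n -> R) j :
  M^T = M -> M \in unitmx -> (forall k, 0 < d k) ->
  (forall v : 'cV[R]_n, \sum_k d k * v k 0 ^+ 2 <= qf M v v) ->
  (invmx M) j j <= (d j)^-1.
Proof.
move=> MT Mu dpos hM.
set B := invmx M; set e : 'cV[R]_n := delta_mx j 0; set x := B *m e.
have hx : x j 0 = B j j by rewrite /x /e -colE mxE.
have hq : qf M x x = B j j.
  rewrite /x qf_mul (inv_sym MT) -/B.
  by rewrite /B mulVmx // mul1mx qf_delta.
have h := hM x; rewrite hq in h.
have hs : d j * x j 0 ^+ 2 <= \sum_k d k * x k 0 ^+ 2.
  rewrite (bigD1 j) //= lerDl; apply: sumr_ge0 => k _.
  by apply: mulr_ge0; [apply: ltW|apply: sqr_ge0].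
rewrite hx in hs.
have dj := dpos j.
rewrite -(ler_pM2l dj) mulfV ?gt_eqF //.
have : d j * B j j ^+ 2 <= B j j by apply: le_trans hs h.
nra.
Qed.

Lemma inv_entry_lb {R : realFieldType} n (M : 'M[R]_n) j a :
  M^T = M -> (forall v, 0 <= qf M v v) -> M \in unitmx -> 0 < a -> M j j <= a ->
  a^-1 <= (invmx M) j j.
Proof.
move=> MT psdM Mu a0 ha.
set B := invmx M; set e : 'cV[R]_n := delta_mx j 0; set x := B *m e.
have hq : qf M x x = B j j.
  rewrite /x qf_mul (inv_sym MT) -/B.
  by rewrite /B mulVmx // mul1mx qf_delta.
have h1 : qf M x e = 1.
  rewrite /x -[e in qf M _ e]mul1mx qf_mul (inv_sym MT) -/B mulmx1 /B mulVmx //.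
  by rewrite qf_delta mxE eqxx.
have cs := qf_CS MT psdM x e.
rewrite h1 hq qf_delta expr1n in cs.
have b0 : 0 <= B j j by rewrite -hq psdM.
rewrite -(ler_pM2l a0) mulfV ?gt_eqF //; nra.
Qed.


Lemma qf_diag {R : realFieldType} n (r : 'rV[R]_n) v :
  qf (diag_mx r) v v = \sum_k r 0 k * v k 0 ^+ 2.
Proof.
rewrite qfE; apply: eq_bigr => i _.
rewrite (bigD1 i) //= big1 ?addr0; first by rewrite !mxE eqxx mulr1n; ring.
by move=> j /negbTE ji; rewrite !mxE eq_sym ji mulr0n mulr0 mul0r.
Qed.

Lemma qf_diagf {R : realFieldType} n (f : 'I_n -> R) v :
  qf (diag_mx (\row_j f j)) v v = \sum_k f k * v k 0 ^+ 2.
Proof. by rewrite qf_diag; apply: eq_bigr => k _; rewrite mxE. Qed.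

Lemma inv_diag {R : realFieldType} n (s : 'I_n -> R) : (forall j, s j != 0) ->
  invmx (diag_mx (\row_j s j)) = diag_mx (\row_j (s j)^-1).
Proof.
move=> s0.
have h : diag_mx (\row_j s j) *m diag_mx (\row_j (s j)^-1) = 1%:M.
  rewrite mulmx_diag -diag_const_mx; congr diag_mx; apply/rowP => j.
  by rewrite !mxE mulfV.
have [u _] := mulmx1_unit h.
by rewrite -[RHS]mul1mx -(mulVmx u) -mulmxA h mulmx1.
Qed.

Lemma vec_nz_coord {R : realFieldType} n (v : 'cV[R]_n) : v != 0 -> exists k, v k 0 != 0.
Proof.
move=> v0; case: (pickP (fun k => v k 0 != 0)) => [k hk|h]; first by exists k.
move/eqP: v0; case; apply/matrixP => i j; rewrite (ord1 j) mxE.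
by have := h i; rewrite /= => /negbFE /eqP.
Qed.

Lemma wsum_pos {R : realFieldType} n (d : 'I_n -> R) (v : 'cV[R]_n) :
  (forall k, 0 < d k) -> v != 0 -> 0 < \sum_k d k * v k 0 ^+ 2.
Proof.
move=> dp v0; have [k vk] := vec_nz_coord v0.
rewrite (bigD1 k) //=; apply: ltr_wpDr.
  by apply: sumr_ge0 => i _; apply: mulr_ge0; [apply: ltW|apply: sqr_ge0].
by apply: mulr_gt0 => //; rewrite exprn_even_gt0.
Qed.

Lemma mat_main {R : realType} n (A W Sg : 'M[R]_n) (c s2 : 'I_n -> R) lam (i0 : 'I_n) :
  W^T = W -> (forall v, v != 0 -> 0 < qf W v v) ->
  (forall j, 0 < c j) -> (forall j, 0 < s2 j) ->
  Sg^T = Sg -> (forall v, 0 <= qf Sg v v) ->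
  let C : 'M[R]_n := diag_mx (\row_j c j) in
  let V : 'M[R]_n := diag_mx (\row_j s2 j) in
  Sg = A *m Sg *m A^T
          - A *m Sg *m C^T *m invmx (C *m Sg *m C^T + V) *m C *m Sg *m A^T
          + W ->
  eigenvalue W lam -> (forall a, eigenvalue W a -> lam <= a) ->
  let Sb := invmx (C^T *m invmx V *m C + invmx Sg) in
  0 < lam /\
  forall j, (c j ^+ 2 / s2 j + lam^-1)^-1 <= Sb j j <= (c j ^+ 2 / s2 j)^-1.
Proof.
move=> WT pdW cp sp ST psdS C V ric evl minl Sb.
have psdW : forall v, 0 <= qf W v v.
  by move=> v; have [->|v0] := eqVneq v 0; [rewrite qf0l|apply: ltW; apply: pdW].
have lp : 0 < lam by apply: eig_pos pdW evl.
have hW := mineig i0 WT psdW minl.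
have psdV : forall z, 0 <= qf V z z.
  move=> z; rewrite qf_diag; apply: sumr_ge0 => k _; rewrite mxE.
  by apply: mulr_ge0; [apply: ltW|apply: sqr_ge0].
have Su : (C *m Sg *m C^T + V) \in unitmx.
  apply: pd_unit => z z0.
  have h1 : 0 <= qf (C *m Sg *m C^T) z z.
    have -> : qf (C *m Sg *m C^T) z z = qf Sg (C^T *m z) (C^T *m z) by rewrite qf_mul trmxK.
    exact: psdS.
  rewrite qfMD; apply: ltr_wpDl h1 _.
  by rewrite qf_diagf; apply: wsum_pos.
have hSW : forall v, qf W v v <= qf Sg v v.
  move=> v; rewrite -subr_ge0.
  have -> : qf Sg v v - qf W v v = qf (Sg - W) v v by rewrite qfBM.
  have -> : Sg - W = A *m (Sg - Sg *m C^T *m invmx (C *m Sg *m C^T + V) *m C *m Sg) *m A^T.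
    by rewrite {1}ric addrK mulmxBr mulmxBl !mulmxA.
  set P := (Sg - _).
  have -> : qf (A *m P *m A^T) v v = qf P (A^T *m v) (A^T *m v) by rewrite qf_mul trmxK.
  exact: post_psd.
have hSl : forall v : 'cV[R]_n, \sum_k (fun _ => lam) k * v k 0 ^+ 2 <= qf Sg v v.
  move=> v; rewrite -mulr_sumr; apply: le_trans (hSW v).
  by have := hW v; rewrite /nrm2.
have Sgu : Sg \in unitmx.
  apply: pd_unit => v v0; apply: lt_le_trans (hSl v).
  by apply: wsum_pos.
set B := invmx Sg.
have BT : B^T = B by apply: inv_sym.
have psdB : forall v, 0 <= qf B v v.
  move=> v; have -> : qf B v v = qf Sg (B *m v) (B *m v).
    by rewrite qf_mul BT /B mulVmx // mul1mx.
  exact: psdS.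
set d := fun j => c j ^+ 2 / s2 j.
have dp : forall j, 0 < d j by move=> j; apply: divr_gt0; [apply: exprn_gt0; exact: cp|exact: sp].
have DE : C^T *m invmx V *m C = diag_mx (\row_j d j).
  rewrite /C /V tr_diag_mx inv_diag; last by move=> j; rewrite gt_eqF.
  rewrite !mulmx_diag; congr diag_mx; apply/rowP => j; rewrite !mxE /d; ring.
set M := C^T *m invmx V *m C + invmx Sg.
have MT : M^T = M by rewrite /M linearD /= BT DE tr_diag_mx.
have hM : forall v : 'cV[R]_n, \sum_k d k * v k 0 ^+ 2 <= qf M v v.
  move=> v; rewrite /M qfMD DE qf_diagf.
  by rewrite lerDl psdB.
have psdM : forall v, 0 <= qf M v v.
  move=> v; apply: le_trans (hM v); apply: sumr_ge0 => k _.
  by apply: mulr_ge0; [apply: ltW|apply: sqr_ge0].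
have Mu : M \in unitmx.
  by apply: pd_unit => v v0; apply: lt_le_trans (hM v); apply: wsum_pos.
split => // j; apply/andP; split; last exact: (inv_entry_ub j MT Mu dp hM).
apply: inv_entry_lb => //; first by apply: addr_gt0; [apply: dp|rewrite invr_gt0].
rewrite /M DE !mxE eqxx mulr1n lerD2l.
have := @inv_entry_ub _ _ Sg (fun _ => lam) j ST Sgu (fun _ => lp) hSl.
by [].
Qed.


Definition gf {R : realType} (z : R) : R := expR (- (z ^+ 2) / 2).

Lemma gf_ge0 {R : realType} (z : R) : 0 <= gf z.
Proof. exact: expR_ge0. Qed.

Lemma is_derive_h {R : realType} (x : R) :
  is_derive x 1 (fun z : R => - (z ^+ 2) / 2) (- x).
Proof.
have -> : (fun z : R => - (z ^+ 2) / 2) = (- 2^-1) *: (@id R ^+ 2).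
  by apply/funext => z /=; rewrite !fctE /=; rewrite -[_ *: _]/(_ * _); ring.
apply: is_derive_eq; change (- 2^-1 * ((2 * x ^+ 1) * 1) = - x :> R); by rewrite expr1; field.
Qed.

Lemma is_derive_gf {R : realType} (x : R) : is_derive x 1 (@gf R) (- x * gf x).
Proof.
have -> : @gf R = expR \o (fun z : R => - (z ^+ 2) / 2) by [].
have := @is_derive1_comp R expR (fun z : R => - (z ^+ 2) / 2) x _ _ (is_derive_expR _) (is_derive_h x).
by move/is_derive_eq; apply; rewrite /gf mulrC.
Qed.

Lemma der_cont {R : realType} (f : R -> R) : (forall x, derivable f x 1) -> continuous f.
Proof. by move=> df x; apply: differentiable_continuous; apply/derivable1_diffP. Qed.

Lemma der_meas {R : realType} (f : R -> R) (D : set R) :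
  (forall x, derivable f x 1) -> measurable_fun D (fun x => (f x)%:E).
Proof.
move=> df; apply/measurable_EFinP; apply: measurable_funTS.
by apply: continuous_measurable_fun; apply: der_cont.
Qed.

Lemma gf_der {R : realType} (x : R) : derivable (@gf R) x 1.
Proof. by have [] := is_derive_gf x. Qed.

Lemma gf_cvg0 {R : realType} : @gf R x @[x --> +oo] --> 0.
Proof.
have -> : @gf R = (fun y => expR (- y)) \o (fun x => x ^+ 2 * 2^-1).
  by apply/funext => z; rewrite /gf /= mulNr.
apply: (cvg_comp (fun x : R => x ^+ 2 * 2^-1) (fun y => expR (- y))); last exact: cvgr_expR.
apply: gt0_cvgMly; first by rewrite invr_gt0.
exact: cvgr_expr2.
Qed.

Lemma int_upper {R : realType} (K : R) : 0 < K ->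
  (\int[@lebesgue_measure R]_(z in `[K, +oo[%classic) (gf z)%:E <= (gf K / K)%:E)%E.
Proof.
move=> K0.
pose f z := z / K * gf z.
pose F z := - K^-1 * gf z.
have dF (x : R) : is_derive x (1 : R) F (f x).
  have -> : F = (- K^-1) \*: @gf R by apply/funext => z; rewrite /F.
  have := is_deriveZ (- K^-1) (is_derive_gf x); move/is_derive_eq; apply.
  by rewrite /f -[_ *: _]/(_ * _); ring.
have df (x : R) : derivable f x 1.
  have -> : f = (K^-1 \*: (@id R)) * @gf R.
    by apply/funext => z; rewrite /f; change (z / K * gf z = K^-1 * z * gf z); ring.
  apply: derivableM; last exact: gf_der.
  by apply: derivableZ; exact: derivable_id.
have dFF (x : R) : derivable F x 1 by have [] := dF x.
have h1 : (\int[@lebesgue_measure R]_(z in `[K, +oo[%classic) (gf z)%:E <=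
           \int[@lebesgue_measure R]_(z in `[K, +oo[%classic) (f z)%:E)%E.
  apply: ge0_le_integral => //.
  - by move=> x _; rewrite lee_fin gf_ge0.
  - exact: der_meas gf_der.
  - exact: der_meas df.
  - move=> x; rewrite /= in_itv /= andbT => Kx; rewrite lee_fin /f.
    rewrite ler_peMl ?gf_ge0 //.
    by rewrite ler_pdivlMr // mul1r.
rewrite (le_trans h1) //.
rewrite (@ge0_continuous_FTC2y R f F K 0).
- by rewrite sub0e -EFinN lee_fin /F le_eqVlt; apply/orP; left; apply/eqP; ring.
- move=> x Kx; rewrite /f; apply: mulr_ge0; last exact: gf_ge0.
  by apply: divr_ge0; [exact: le_trans (ltW K0) Kx | exact: ltW].
- by apply: continuous_subspaceT; apply: der_cont.
- have -> : (0 : R) = - K^-1 * 0 by rewrite mulr0.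
  by apply: cvgMr; exact: gf_cvg0.
- by move=> x _; apply: dFF.
- by apply: cvg_at_right_filter; apply: der_cont.
- by move=> x _; rewrite derive1E; have [_ ->] := dF x.
Qed.

Lemma int_lower {R : realType} (K : R) : K <= 1 ->
  ((gf 1 / 2)%:E <= \int[@lebesgue_measure R]_(z in `[K, +oo[%classic) (gf z)%:E)%E.
Proof.
move=> K1.
pose f (z : R) := gf z * (2^-1 + z - z ^+ 2 / 2).
pose F (z : R) := (z / 2 - 1) * gf z.
have dF (x : R) : is_derive x (1 : R) F (f x).
  have -> : F = ((2^-1 \*: @id R) - cst 1) * @gf R.
    by apply/funext => z; rewrite /F; change ((z / 2 - 1) * gf z = (2^-1 * z - 1) * gf z); ring.
  have h1 := is_deriveB (is_deriveZ 2^-1 (is_derive_id x (1 : R))) (is_derive_cst (1 : R) x (1 : R)).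
  have := is_deriveM h1 (is_derive_gf x); move/is_derive_eq; apply.
  rewrite /f; change ((2^-1 * x - 1) * (- x * gf x) + gf x * (2^-1 * 1 - 0) =
     gf x * (2^-1 + x - x ^+ 2 / 2)); ring.
have df (x : R) : derivable f x 1.
  have -> : f = @gf R * (cst 2^-1 + @id R - (2^-1 \*: (@id R ^+ 2))).
    by apply/funext => z; rewrite /f; change (gf z * (2^-1 + z - z ^+ 2 / 2) =
       gf z * (2^-1 + z - 2^-1 * z ^+ 2)); ring.
  apply: derivableM; first exact: gf_der.
  apply: derivableB; first apply: derivableD.
  - exact: derivable_cst.
  - exact: derivable_id.
  - by apply: derivableZ; apply: derivableX; exact: derivable_id.
have dFF (x : R) : derivable F x 1 by have [] := dF x.
have cF : continuous F by apply: der_cont.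
have fle : forall x, 1 <= x <= 2 -> 0 <= f x <= gf x.
  move=> x /andP[x1 x2]; rewrite /f; have g0 := gf_ge0 x; apply/andP; split.
    by apply: mulr_ge0 => //; nra.
  rewrite ler_piMr //; nra.
have h1 : (\int[@lebesgue_measure R]_(z in `[1%R, 2%R]%classic) (f z)%:E =
           (F 2)%:E - (F 1)%:E)%E.
  apply: continuous_FTC2.
  - lra.
  - by apply: continuous_subspaceT; apply: der_cont.
  - split.
    + by move=> x _; apply: dFF.
    + by apply: cvg_at_right_filter; apply: cF.
    + by apply: cvg_at_left_filter; apply: cF.
  - by move=> x _; rewrite derive1E; have [_ ->] := dF x.
have h2 : (\int[@lebesgue_measure R]_(z in `[1%R, 2%R]%classic) (f z)%:E <=
           \int[@lebesgue_measure R]_(z in `[1%R, 2%R]%classic) (gf z)%:E)%E.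
  apply: ge0_le_integral => //.
  - by move=> x; rewrite /= in_itv /= => /fle /andP[h _]; rewrite lee_fin.
  - exact: der_meas df.
  - exact: der_meas gf_der.
  - by move=> x; rewrite /= in_itv /= => /fle /andP[_ h]; rewrite lee_fin.
have h3 : (\int[@lebesgue_measure R]_(z in `[1%R, 2%R]%classic) (gf z)%:E <=
           \int[@lebesgue_measure R]_(z in `[K, +oo[%classic) (gf z)%:E)%E.
  apply: ge0_subset_integral => //.
  - exact: der_meas gf_der.
  - by move=> x _; rewrite lee_fin gf_ge0.
  - move=> x; rewrite /= !in_itv /= andbT => /andP[x1 _]; exact: le_trans K1 x1.
apply: le_trans h3; apply: le_trans h2; rewrite h1 -EFinB lee_fin /F.
rewrite le_eqVlt; apply/orP; left; apply/eqP; by field.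
Qed.

Lemma sq_le {R : realFieldType} (b x : R) : 0 <= b -> b <= x -> b ^+ 2 <= x ^+ 2.
Proof. move=> b0 bx; nra. Qed.

Lemma exp_big {R : realType} : (11112 : R) <= expR (81 / 8).
Proof.
have h0 : (1105 / 1024 : R) <= expR (81 / 1024).
  by apply: le_trans (expR_ge1Dx _); lra.
have -> : (81 / 8 : R) = (2 * 2 * 2 * 2 * 2 * 2 * 2)%N%:R * (81 / 1024).
  rewrite !natrM; lra.
rewrite expRM_natl.
set a := expR (81 / 1024 : R).
rewrite !exprM.
have s1 : (1164 / 1000 : R) <= a ^+ 2 by apply: le_trans (sq_le _ h0); lra.
have s2 : (1354 / 1000 : R) <= (a ^+ 2) ^+ 2 by apply: le_trans (sq_le _ s1); lra.
have s3 : (1833 / 1000 : R) <= ((a ^+ 2) ^+ 2) ^+ 2 by apply: le_trans (sq_le _ s2); lra.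
have s4 : (3359 / 1000 : R) <= (((a ^+ 2) ^+ 2) ^+ 2) ^+ 2 by apply: le_trans (sq_le _ s3); lra.
have s5 : (11282 / 1000 : R) <= ((((a ^+ 2) ^+ 2) ^+ 2) ^+ 2) ^+ 2 by apply: le_trans (sq_le _ s4); lra.
have s6 : (127 : R) <= (((((a ^+ 2) ^+ 2) ^+ 2) ^+ 2) ^+ 2) ^+ 2 by apply: le_trans (sq_le _ s5); lra.
by apply: le_trans (sq_le _ s6); lra.
Qed.

Lemma inv_le_inv {R : realFieldType} (b e : R) : 0 < b -> b <= e -> e^-1 <= b^-1.
Proof.
move=> b0 be; have e0 : 0 < e by apply: lt_le_trans be.
by rewrite lef_pV2 ?posrE.
Qed.

Lemma s_bounds {R : realFieldType} (s p : R) : 0 < s -> s ^+ 2 = 2 * p -> 2 <= p -> p < 4 ->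
  2 <= s /\ s < 283 / 100.
Proof.
move=> sp ss p2 p4; split.
  rewrite leNgt; apply/negP => h; have : s ^+ 2 < 2 ^+ 2.
    by rewrite ltr_pXn2r // ?posrE //; apply: ltW.
  rewrite ss expr2; lra.
rewrite ltNge; apply/negP => h; have := sq_le _ h; rewrite ss expr2; lra.
Qed.

Lemma sqK_bound {R : realFieldType} (K : R) : 9 / 2 < K -> - (K ^+ 2) / 2 <= - (81 / 8).
Proof. move=> h; have := sq_le _ (ltW h); rewrite expr2; lra. Qed.



Lemma K_bounds {R : realType} (K d : R) :
  Qfun K = d -> 10 ^- 5 <= d <= 10 ^- 1 -> 1 <= K <= 9 / 2.
Proof.
rewrite /Qfun => QK /andP[d1 d2].
have e5 : (10 : R) ^- 5 = 1 / (100 * 1000) by rewrite -exprVn; field.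
have e1 : (10 : R) ^- 1 = 1 / 10 by rewrite expr1; field.
rewrite e5 in d1; rewrite e1 in d2.
set s := Num.sqrt (2 * pi : R) in QK.
have pi4 : pi < 4 :> R by have := @pihalf_lt2 R; lra.
have pi2 : 2 <= pi :> R by exact: pi_ge2.
have s0 : 0 <= s by apply: sqrtr_ge0.
have ss : s ^+ 2 = 2 * pi by rewrite sqr_sqrtr //; lra.
have sp : 0 < s by rewrite lt_def s0 andbT; apply/eqP => h; rewrite h expr0n /= in ss; lra.
have [s2 s3] := s_bounds sp ss pi2 pi4.
set I := (\int[lebesgue_measure]_(z in `[K, +oo[) (expR (- (z ^+ 2) / 2))%:E)%E in QK.
have I0 : (0 <= I)%E by apply: integral_ge0 => x _; rewrite lee_fin expR_ge0.
apply/andP; split.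
- rewrite leNgt; apply/negP => K1.
  have := int_lower (ltW K1); rewrite -/I; move: QK.
  rewrite -/s -/I; case: I I0 => [r _ QK|_ QK _|//]; last by rewrite /= mulr0 in QK; lra.
  rewrite lee_fin /= in QK * => hr.
  have g1 : (2401 / 4096 : R) <= gf 1.
    have -> : gf (1 : R) = expR (- (1 / 8)) ^+ 4.
      by rewrite -expRM_natl /gf; congr expR; field.
    have h : (7 / 8 : R) <= expR (- (1/8)) by apply: le_trans (expR_ge1Dx _); lra.
    have := sq_le _ (sq_le _ h); rewrite -!exprM /=; lra.
  have h : s * (1 / 10) < r by lra.
  have : s^-1 * r > 1 / 10.
    by rewrite -(ltr_pM2l sp) mulVKf ?gt_eqF //.
  lra.
- rewrite leNgt; apply/negP => K1.
  have K0 : 0 < K by lra.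
  have := int_upper K0; rewrite -/I; move: QK.
  rewrite -/s -/I; case: I I0 => [r r0 QK|//|//].
  rewrite lee_fin /= in QK r0 * => hr.
  have gK : gf K <= expR (- (81 / 8)) :> R.
    by rewrite /gf ler_expR; apply: sqK_bound.
  have eb : expR (- (81 / 8)) <= (1 / 11112 : R).
    rewrite expRN div1r; apply: inv_le_inv; first lra.
    exact: exp_big.
  have gK0 := gf_ge0 K.
  have iK : K^-1 <= 2 / 9.
    have -> : (2 / 9 : R) = (9 / 2)^-1 by field.
    by apply: inv_le_inv; lra.
  have hK : gf K / K <= gf K * (2 / 9) by apply: ler_wpM2l.
  rewrite lee_fin in hr.
  have : r < s * (1 / (100 * 1000)) by lra.
  move=> h.
  have : s^-1 * r < 1 / (100 * 1000).
    by rewrite -(ltr_pM2l sp) mulVKf ?gt_eqF //.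
  lra.
Qed.


Lemma sq_le2 {R : realFieldType} (b x : R) : 0 <= b -> b <= x -> b ^+ 2 <= x ^+ 2.
Proof. move=> b0 bx; nra. Qed.

Lemma sig_upper {R : realType} (D e k h : R) : 0 < D -> 0 < e -> 1 <= k -> k <= 9 / 2 -> 0 < h ->
  8^-1 * ((1 + Num.sqrt (36 * h + 1)) / h) ^+ 2 <= e ->
  (D / (2 * e) * (k + Num.sqrt (k ^+ 2 + 2 * e))) ^+ 2 <= h ^+ 2 * D ^+ 2.
Proof.
move=> D0 e0 k1 k9 h0 he.
set r := Num.sqrt (36 * h + 1).
set t := Num.sqrt (k ^+ 2 + 2 * e).
have r0 : 0 <= r by apply: sqrtr_ge0.
have rr : r ^+ 2 = 36 * h + 1 by rewrite sqr_sqrtr //; lra.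
have t0 : 0 <= t by apply: sqrtr_ge0.
have tt : t ^+ 2 = k ^+ 2 + 2 * e by rewrite sqr_sqrtr //; nra.
have r1 : 1 <= r.
  rewrite leNgt; apply/negP => hr; have : r * r < 1 * 1 by apply: ltr_pM.
  rewrite -expr2 rr.
  lra.
have e1 : ((1 + r) / h) ^+ 2 * h ^+ 2 = (1 + r) ^+ 2 by field; rewrite gt_eqF.
have H1 : (1 + r) ^+ 2 <= 8 * e * h ^+ 2.
  rewrite -e1.
  have hh : 0 <= h ^+ 2 by apply: sqr_ge0.
  have := ler_wpM2r hh he.
  set X := ((1 + r) / h) ^+ 2; set Y := h ^+ 2 => hX.
  have -> : 8 * e * Y = 8 * (e * Y) by ring.
  have -> : X * Y = 8 * (8^-1 * X * Y) by field.
  by rewrite ler_pM2l.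
have H2 : 1 + 2 * h * k <= 2 * e * h ^+ 2.
  have : (1 + r) ^+ 2 = 2 + 2 * r + 36 * h.
    have -> : (1 + r) ^+ 2 = 1 + 2 * r + r ^+ 2 by ring.
    rewrite rr; ring.
  nra.
have H3 : k <= 2 * e * h.
  nra.
have H4 : t <= 2 * e * h - k.
  have H3' : 0 <= 2 * e * h - k by lra.
  rewrite -(ler_pXn2r (n := 2)) ?nnegrE //.
  rewrite tt; have := ler_wpM2l (ltW e0) H2; rewrite !expr2; lra.
have H5 : D / (2 * e) * (k + t) <= h * D.
  rewrite mulrAC ler_pdivrMr; last lra.
  nra.
have H6 : 0 <= D / (2 * e) * (k + t).
  apply: mulr_ge0; last lra.
  apply: divr_ge0; lra.
rewrite -exprMn; exact: sq_le2.
Qed.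

Lemma sig_lower {R : realType} (D e k g : R) : 0 < D -> 0 < e -> 1 <= k -> 0 < g ->
  e <= g^-1 ->
  g ^+ 2 * D ^+ 2 <= (D / (2 * e) * (k + Num.sqrt (k ^+ 2 + 2 * e))) ^+ 2.
Proof.
move=> D0 e0 k1 g0 eg.
set t := Num.sqrt (k ^+ 2 + 2 * e).
have t0 : 0 <= t by apply: sqrtr_ge0.
have tt : t ^+ 2 = k ^+ 2 + 2 * e by rewrite sqr_sqrtr //; nra.
have tk : k <= t.
  rewrite leNgt; apply/negP => h; have := sq_le2 t0 (ltW h); rewrite tt; nra.
have eg1 : e * g <= 1.
  have := ler_wpM2r (ltW g0) eg; rewrite mulVf ?gt_eqF //.
have H : g * D <= D / (2 * e) * (k + t).
  rewrite mulrAC ler_pdivlMr; last lra.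
  nra.
rewrite -exprMn; apply: sq_le2 => //; nra.
Qed.

Lemma fin_upper {R : realFieldType} (n Bu cl s D e4sq : R) :
  0 < n -> 0 < cl -> 0 < D -> 0 < s ->
  e4sq = Bu * cl ^+ 2 / (n * D ^+ 2) -> s <= e4sq * D ^+ 2 ->
  n * (cl ^+ 2 / s)^-1 <= Bu.
Proof.
move=> n0 c0 D0 s0 -> hs.
have c2 : 0 < cl ^+ 2 by apply: exprn_gt0.
have D2 : 0 < D ^+ 2 by apply: exprn_gt0.
have e : Bu * cl ^+ 2 / (n * D ^+ 2) * D ^+ 2 = Bu * cl ^+ 2 / n.
  by field; rewrite !gt_eqF.
rewrite e in hs.
rewrite invf_div mulrA ler_pdivrMr //.
rewrite ler_pdivlMr // in hs; lra.
Qed.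

Lemma fin_lower {R : realFieldType} (n Bl cu s D lam e3sq : R) :
  0 < n -> 0 < cu -> 0 < D -> 0 < lam -> 0 < s -> 0 < Bl ->
  e3sq = Bl * cu ^+ 2 / (D ^+ 2 * (n - Bl * lam^-1)) -> 0 < e3sq ->
  e3sq * D ^+ 2 <= s ->
  Bl <= n * (cu ^+ 2 / s + lam^-1)^-1.
Proof.
move=> n0 c0 D0 l0 s0 B0 he e3 hs.
have c2 : 0 < cu ^+ 2 by apply: exprn_gt0.
have D2 : 0 < D ^+ 2 by apply: exprn_gt0.
set m := n - Bl * lam^-1 in he.
have m0 : 0 < m.
  rewrite ltNge; apply/negP => hm.
  have : e3sq <= 0.
    rewrite he; apply: mulr_ge0_le0; first by apply: mulr_ge0; apply: ltW.
    by rewrite invr_le0; apply: mulr_ge0_le0 => //; apply: ltW.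
  lra.
have e : Bl * cu ^+ 2 / (D ^+ 2 * m) * D ^+ 2 = Bl * cu ^+ 2 / m.
  by field; rewrite !gt_eqF.
rewrite he e ler_pdivrMr // in hs.
have h1 : cu ^+ 2 / s <= m / Bl.
  rewrite ler_pdivrMr // mulrAC ler_pdivlMr //; lra.
have li : 0 < lam^-1 by rewrite invr_gt0.
have h2 : cu ^+ 2 / s + lam^-1 <= n / Bl.
  have Bn0 : Bl != 0 by rewrite gt_eqF.
  have ln0 : lam != 0 by rewrite gt_eqF.
  have -> : n / Bl = m / Bl + lam^-1 by rewrite /m; field; rewrite ln0 Bn0.
  lra.
have p : 0 < cu ^+ 2 / s + lam^-1 by apply: addr_gt0 => //; apply: divr_gt0.
rewrite -(ler_pM2r p) divfK ?gt_eqF //.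
rewrite ler_pdivlMr // in h2; lra.
Qed.

End Helpers.
Import Helpers.

Local Open Scope ring_scope.

Theorem theorem8 (R : realType) (n N : nat) (owner : 'I_n -> 'I_N)
  (A W : 'M[R]_n) (c : 'I_n -> R) (b : 'I_N -> R)
  (delta eps K : 'I_N -> R) (Sigma : 'M[R]_n) (lam Bl Bu : R) (l u : 'I_n) :
  pd W ->
  (forall j, 0 < c j) ->
  (forall i, 0 < b i) ->
  (forall i, 0 < sensitivity owner c (b i) i) ->
  (forall i, 10 ^- 5 <= delta i <= 10 ^- 1) ->
  (forall i, 0 < eps i) ->
  (forall i, Qfun (K i) = delta i) ->
  let C : 'M[R]_n := diag_mx (\row_j c j) in
  let Dy i := sensitivity owner c (b i) i in
  let sigma i := Dy i / (2 * eps i) * (K i + Num.sqrt (K i ^+ 2 + 2 * eps i)) in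
  let sig2 j := sigma (owner j) ^+ 2 in
  let V : 'M[R]_n := diag_mx (\row_j sig2 j) in
  psd Sigma ->
  Sigma = A *m Sigma *m A^T
          - A *m Sigma *m C^T *m invmx (C *m Sigma *m C^T + V) *m C *m Sigma *m A^T
          + W ->
  let Sigmabar := invmx (C^T *m invmx V *m C + invmx Sigma) in
  is_min_eigenvalue W lam ->
  (forall j, c l ^+ 2 / sig2 l <= c j ^+ 2 / sig2 j) ->
  (forall j, c j ^+ 2 / sig2 j <= c u ^+ 2 / sig2 u) ->
  let eta3sq i := Bl * c u ^+ 2 / (Dy i ^+ 2 * (n%:R - Bl * lam^-1)) in
  let eta4sq i := Bu * c l ^+ 2 / (n%:R * Dy i ^+ 2) in
  (forall i, 0 < eta3sq i) ->
  (forall i, 0 < eta4sq i) ->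
  let eta3 i := Num.sqrt (eta3sq i) in
  let eta4 i := Num.sqrt (eta4sq i) in
  (forall i, 8^-1 * ((1 + Num.sqrt (36 * eta4 i + 1)) / eta4 i) ^+ 2 <= eps i
             <= (eta3 i)^-1) ->
  Bl <= \tr Sigmabar <= Bu.
Proof.
move=> [WT pdW] cpos bpos Dpos dlt epos QK C Dy sigma sig2 V [ST psdS] ric Sb [evl minl]
  hl hu eta3sq eta4sq e3p e4p eta3 eta4 heps.
have Kb i : 1 <= K i <= 9 / 2 by apply: (K_bounds (QK i) (dlt i)).
have sigp i : 0 < sigma i.
  rewrite /sigma; have /andP[k1 _] := Kb i.
  have := sqrtr_ge0 (K i ^+ 2 + 2 * eps i) => sq.
  apply: mulr_gt0; last lra.
  by apply: divr_gt0; [exact: Dpos|have := epos i; lra].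
have s2p j : 0 < sig2 j by rewrite /sig2; apply: exprn_gt0.
have [lp hb] := @mat_main R n A W Sigma c sig2 lam l WT pdW cpos s2p ST psdS ric evl minl.
rewrite -/Sb in hb.
set d := fun j => c j ^+ 2 / sig2 j.
have dp j : 0 < d j by apply: divr_gt0; [apply: exprn_gt0|].
have n0 : (0 < n%:R :> R) by rewrite ltr0n; apply: (leq_ltn_trans (leq0n l) (ltn_ord l)).
have sumc (x : R) : \sum_(j < n) x = n%:R * x by rewrite sumr_const card_ord mulr_natl.
rewrite /mxtrace; apply/andP; split.
- have key : n%:R * (d u + lam^-1)^-1 <= \sum_j Sb j j.
    rewrite -sumc; apply: ler_sum => j _.
    have /andP[h _] := hb j; apply: le_trans h.
    apply: inv_le_inv; first by apply: addr_gt0; [apply: dp|rewrite invr_gt0].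
    by rewrite lerD2r; apply: hu.
  apply: le_trans key.
  have [B0|B0] := lerP Bl 0.
    apply: le_trans B0 _; apply: mulr_ge0; first exact: ltW.
    by rewrite invr_ge0; apply: ltW; apply: addr_gt0; [apply: dp|rewrite invr_gt0].
  set i := owner u.
  have e3 : 0 < eta3 i by rewrite /eta3 sqrtr_gt0.
  have /andP[_ he] := heps i.
  have /andP[k1 _] := Kb i.
  have hs := sig_lower (Dpos i) (epos i) k1 e3 he.
  rewrite /eta3 sqr_sqrtr in hs; last exact: ltW.
  exact: (fin_lower n0 (cpos u) (Dpos i) lp (s2p u) B0 erefl (e3p i) hs).
- apply: (@le_trans _ _ (\sum_(j < n) (d l)^-1)).
    apply: ler_sum => j _.
    have /andP[_ h] := hb j; apply: le_trans h _.
    by apply: inv_le_inv; [apply: dp|apply: hl].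
  rewrite sumc.
  set i := owner l.
  have e4 : 0 < eta4 i by rewrite /eta4 sqrtr_gt0.
  have /andP[he _] := heps i.
  have /andP[k1 k9] := Kb i.
  have hs := sig_upper (Dpos i) (epos i) k1 k9 e4 he.
  rewrite /eta4 sqr_sqrtr in hs; last exact: ltW.
  exact: (fin_upper n0 (cpos l) (Dpos i) (s2p l) erefl hs).
Qed.
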